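(* The extended Rota-Baxter algebra $(\text{Ш}_e(\mathbf{k}),\diamond,P_{\mathbf{k}})$ of weight $(\lambda,\kappa)$ is the initial object in the category of commutative extended Rota-Baxter algebras of weight $(\lambda,\kappa)$: for any commutative extended Rota-Baxter algebra $(R,P)$ of weight $(\lambda,\kappa)$ there exists a unique extended Rota-Baxter algebra homomorphism $\bar f:(\text{Ш}_e(\mathbf{k}),\diamond,P_{\mathbf{k}})\to(R,P)$.
   Context: $\mathbf{k}$ is a commutative unitary ring, $\lambda,\kappa\in\mathbf{k}$. An extended Rota-Baxter operator of weight $(\lambda,\kappa)$ on an algebra $R$ is a linear $P:R\to R$ with $P(x)P(y)=P(xP(y))+P(P(x)y)+\lambda P(xy)+\kappa xy$; homomorphisms are algebra homomorphisms commuting with the operators. $\text{Ш}_e(\mathbf{k})=\bigoplus_{n\ge0}\mathbf{k}\,\mathbf{1}^{\otimes(n+1)}$ with product $\mathbf{1}^{\otimes(m+1)}\diamond\mathbf{1}^{\otimes(n+1)}=\sum_{r=0}^{\min\{m,n\}}\sum_{i=0}^{r}\binom{m+n-r}{m}\binom{m}{r}\binom{r}{i}\lambda^{r-i}\kappa^i\mathbf{1}^{\otimes(m+n+1-r-i)}$, and $P_{\mathbf{k}}(\mathbf{1}^{\otimes n})=\mathbf{1}^{\otimes (n+1)}$. This is the free commutative extended Rota-Baxter algebra of weight $(\lambda,\kappa)$ on $\mathbf{k}$. *)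

(* Defs.v *)
From HB Require Import structures.
From mathcomp Require Import all_boot all_order all_algebra.
Set Implicit Arguments. Unset Strict Implicit. Unset Printing Implicit Defensive.
Import GRing.Theory.
Local Open Scope ring_scope.

(* Ш_e(k) = ⊕_{n>=0} k 1^{⊗(n+1)} is represented by the free k-module
   {poly k}: the basis element 1^{⊗(n+1)} is encoded by 'X^n.
   The (polynomial) ring structure of {poly k} is NOT used as the algebra
   structure; only its k-module structure is.  The product of Ш_e(k) is
   [sha_mul] below, and its unit is 1^{⊗1} = 'X^0 = 1. *)

Section ShaE.
Variables (k : comNzRingType) (lambda kappa : k).

Definition sha_basis_mul (m n : nat) : {poly k} :=
  \sum_(r < (minn m n).+1) \sum_(i < r.+1)
     (('C(m + n - r, m) * 'C(m, r) * 'C(r, i))%:R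
        * lambda ^+ (r - i) * kappa ^+ i) *: 'X^(m + n - r - i).

Definition sha_mul (p q : {poly k}) : {poly k} :=
  \sum_(i < size p) \sum_(j < size q) (p`_i * q`_j) *: sha_basis_mul i j.

(* P_k (1^{⊗ n}) = 1^{⊗(n+1)}, i.e. 'X^(n-1) |-> 'X^n, extended linearly *)
Definition sha_P (p : {poly k}) : {poly k} := p * 'X.

Definition is_ext_RB_operator (R : comAlgType k) (P : R -> R) : Prop :=
  linear P /\
  forall x y : R,
    P x * P y = P (x * P y) + P (P x * y) + lambda *: P (x * y) + kappa *: (x * y).

Definition is_ext_RB_hom_from_sha (R : comAlgType k) (P : R -> R)
    (f : {poly k} -> R) : Prop :=
  [/\ linear f,
      f 1 = 1,
      (forall p q, f (sha_mul p q) = f p * f q)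
    & (forall p, f (sha_P p) = P (f p))].

End ShaE.

(* Main.v *)
Require Import Defs.
From HB Require Import structures.
From mathcomp Require Import all_boot all_order all_algebra.
From mathcomp Require Import ring zify.
Set Implicit Arguments. Unset Strict Implicit. Unset Printing Implicit Defensive.
Import GRing.Theory.
Local Open Scope ring_scope.

Local Open Scope nat_scope.
Definition cc (m n r : nat) : nat := 'C(m + n - r, m) * 'C(m, r).

Lemma cc_rec0 m n : cc m.+1 n.+1 0 = cc m n.+1 0 + cc m.+1 n 0.
Proof. rewrite /cc !bin0 !muln1 !subn0 addSn addnS binS; ring. Qed.

Lemma cc_recS m n r : cc m.+1 n.+1 r.+1 = cc m n.+1 r.+1 + cc m.+1 n r.+1 + cc m n r.
Proof.
rewrite /cc.
case: (leqP r (m + n)) => h.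
  have -> : m.+1 + n.+1 - r.+1 = (m + n - r).+1 by lia.
  have -> : m + n.+1 - r.+1 = m + n - r by lia.
  have -> : m.+1 + n - r.+1 = m + n - r by lia.
  rewrite binS [X in _ = _ + _ * X + _]binS binS; ring.
have h1 : 'C(m, r.+1) = 0%N by apply: bin_small; lia.
have h2 : 'C(m, r) = 0%N by apply: bin_small; lia.
have h3 : 'C(m.+1, r.+1) = 0%N by apply: bin_small; lia.
by rewrite h1 h2 h3; ring.
Qed.

Lemma cc0m m n r : (m < r)%N -> cc m n r = 0%N.
Proof. by move=> h; rewrite /cc (@bin_small m r) // muln0. Qed.
Lemma cc0n m n r : (n < r)%N -> cc m n r = 0%N.
Proof.
move=> h; case: (ltnP (m + n - r) m) => h'.
  by rewrite /cc (@bin_small (m + n - r)).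
by rewrite /cc (@bin_small m r) ?muln0 //; lia.
Qed.

Local Open Scope ring_scope.

Section Comb.
Variables (k : comNzRingType) (lambda kappa : k).

Definition Y : {poly k} := lambda *: 'X + kappa%:P.
Definition term (m n r : nat) : {poly k} :=
  (cc m n r)%:R *: ('X^(m - r) * 'X^(n - r) * Y ^+ r).
Definition T (N m n : nat) := \sum_(r < N) term m n r.
Definition Bm m n := T m.+1 m n.

Lemma T_stab M N m n : (M <= N)%N -> (forall r, (M <= r)%N -> term m n r = 0) ->
  T N m n = T M m n.
Proof.
move=> hMN h; rewrite -(subnKC hMN); elim: (N - M)%N => [|d IH]; first by rewrite addn0.
by rewrite /T addnS big_ord_recr /= h ?addr0 ?leq_addr // -IH.
Qed.

Lemma term_m m n r : (m < r)%N -> term m n r = 0.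
Proof. by move=> h; rewrite /term cc0m // scale0r. Qed.
Lemma term_n m n r : (n < r)%N -> term m n r = 0.
Proof. by move=> h; rewrite /term cc0n // scale0r. Qed.

Lemma Bm_T N m n : (m < N)%N -> T N m n = Bm m n.
Proof. by move=> h; apply: T_stab => // r hr; apply: term_m. Qed.

Lemma Bm_0n n : Bm 0 n = 'X^n.
Proof.
rewrite /Bm /T big_ord1 /term /cc /= !subn0 add0n bin0 binn.
by rewrite expr0 mul1r mulr1 scale1r.
Qed.

Lemma Bm_m0 m : Bm m 0 = 'X^m.
Proof.
rewrite /Bm (@T_stab 1) //; last by move=> r hr; apply: term_n.
rewrite /T big_ord1 /term /cc /= !subn0 addn0 bin0 binn.
by rewrite expr0 mulr1 mulr1 scale1r.
Qed.

Lemma hX1 m n r : 'X * term m n.+1 r.+1 =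
  (cc m n.+1 r.+1)%:R *: ('X^(m - r) * 'X^(n - r) * Y ^+ r.+1).
Proof.
case: (ltnP r m) => h.
  rewrite /term subSS.
  have -> : (m - r = (m - r.+1).+1)%N by lia.
  rewrite [X in _ = _ *: (X * _ * _)]exprS -!mul_polyC; ring.
rewrite term_m ?cc0m ?scale0r ?mulr0 //; lia.
Qed.

Lemma hX2 m n r : 'X * term m.+1 n r.+1 =
  (cc m.+1 n r.+1)%:R *: ('X^(m - r) * 'X^(n - r) * Y ^+ r.+1).
Proof.
case: (ltnP r n) => h.
  rewrite /term subSS.
  have -> : (n - r = (n - r.+1).+1)%N by lia.
  rewrite [X in _ = _ *: (_ * X * _)]exprS -!mul_polyC; ring.
rewrite term_n ?cc0n ?scale0r ?mulr0 //; lia.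
Qed.

Lemma term_recS m n r : term m.+1 n.+1 r.+1 =
  'X * term m n.+1 r.+1 + 'X * term m.+1 n r.+1 + Y * term m n r.
Proof.
rewrite hX1 hX2 /term !subSS cc_recS !natrD !scalerDl; congr (_ + _).
rewrite exprS -!mul_polyC; ring.
Qed.

Lemma term_rec0 m n : term m.+1 n.+1 0 =
  'X * term m n.+1 0 + 'X * term m.+1 n 0.
Proof.
rewrite /term !subn0 cc_rec0 natrD -!mul_polyC rmorphD /= !exprS; ring.
Qed.

Lemma Bm_rec m n : Bm m.+1 n.+1 = 'X * Bm m n.+1 + 'X * Bm m.+1 n + Y * Bm m n.
Proof.
rewrite -(@Bm_T m.+2 m n.+1) // /Bm /T big_ord_recl term_rec0.
under eq_bigr => i _ do rewrite /= term_recS.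
rewrite !big_split /= -!mulr_sumr.
rewrite !(big_ord_recl m.+1) /=.
rewrite !mulrDr; ring.
Qed.

Lemma sha_Bm m n : sha_basis_mul lambda kappa m n = Bm m n.
Proof.
rewrite /Bm (@T_stab (minn m n).+1); first last.
- move=> r hr; case: (leqP m n) => hmn.
    by apply: term_m; move: hr; rewrite /minn; case: ifP; lia.
  by apply: term_n; move: hr; rewrite /minn; case: ifP; lia.
- by rewrite ltnS geq_minl.
rewrite /sha_basis_mul /T; apply: eq_bigr => -[r /= hr] _.
have hrm : (r <= m)%N by move: hr; rewrite ltnS leq_min => /andP[].
have hrn : (r <= n)%N by move: hr; rewrite ltnS leq_min => /andP[].
rewrite /term /Y exprDn mulr_sumr scaler_sumr; apply: eq_bigr => -[i /= hi] _.
have -> : (m + n - r - i = (m - r) + (n - r) + (r - i))%N by lia.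
rewrite !exprD exprZn -!mul_polyC -mulr_natr /cc !natrM !rmorphM /= !rmorph_nat !rmorphXn /=.
ring.
Qed.

End Comb.

Section Lin.
Variables (k : comNzRingType) (U V : lmodType k) (h : U -> V) (hl : linear h).
Lemma linD x y : h (x + y) = h x + h y.
Proof. by have := hl 1 x y; rewrite !scale1r. Qed.
Lemma lin0 : h 0 = 0.
Proof. by have := hl (-1) 0 0; rewrite scaler0 addr0 scaleN1r addNr. Qed.
Lemma linZ a x : h (a *: x) = a *: h x.
Proof. by have := hl a x 0; rewrite !addr0 lin0 addr0. Qed.
Lemma lin_sum n (F : 'I_n -> U) : h (\sum_(i < n) F i) = \sum_(i < n) h (F i).
Proof. exact: (big_morph h linD lin0). Qed.
End Lin.

Section Alg.
Variables (k : comNzRingType) (lambda kappa : k) (R : comAlgType k) (P : R -> R).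
Hypothesis HP : is_ext_RB_operator lambda kappa P.

Definition pw n := iter n P 1.
Definition ff (p : {poly k}) : R := \sum_(i < size p) p`_i *: pw i.

Lemma ff_N N (p : {poly k}) : (size p <= N)%N -> ff p = \sum_(i < N) p`_i *: pw i.
Proof.
move=> hN; rewrite -(subnKC hN); elim: (N - size p)%N => [|d IH]; first by rewrite addn0.
by rewrite addnS big_ord_recr /= nth_default ?scale0r ?addr0 // leq_addr.
Qed.

Lemma ff_lin : linear ff.
Proof.
move=> a p q.
have hp : (size p <= maxn (size p) (size q))%N by apply: leq_maxl.
have hq : (size q <= maxn (size p) (size q))%N by apply: leq_maxr.
have hs : (size (a *: p + q)%R <= maxn (size p) (size q))%N.
  apply: leq_trans (size_polyD _ _) _; rewrite geq_max hq andbT.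
  exact: leq_trans (size_scale_leq _ _) hp.
rewrite (ff_N hs) (ff_N hp) (ff_N hq) scaler_sumr -big_split /=.
by apply: eq_bigr => i _; rewrite coefD coefZ scalerDl scalerA.
Qed.

Lemma ff1 : ff 1 = 1.
Proof. by rewrite /ff size_poly1 big_ord1 coefC /= scale1r. Qed.

Lemma PD : forall x y, P (x + y) = P x + P y.
Proof. exact: linD (proj1 HP). Qed.
Lemma PZ : forall a x, P (a *: x) = a *: P x.
Proof. exact: linZ (proj1 HP). Qed.

Lemma ffX (p : {poly k}) : ff (p * 'X) = P (ff p).
Proof.
have hs : (size (p * 'X)%R <= (size p).+1)%N.
  apply: leq_trans (size_mul_leq _ _) _; rewrite size_polyX addn2 /=; exact: leqnn.
rewrite (ff_N hs) big_ord_recl coefMX /= scale0r add0r /ff.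
rewrite (lin_sum (proj1 HP)); apply: eq_bigr => i _.
by rewrite coefMX /= PZ.
Qed.

Lemma ffXn n : ff 'X^n = pw n.
Proof. by elim: n => [|n IH]; rewrite ?expr0 ?ff1 // exprSr ffX IH. Qed.

Lemma ff_key m n : ff (Bm lambda kappa m n) = pw m * pw n.
Proof.
elim: m n => [|m IHm] n; first by rewrite Bm_0n ffXn mul1r.
elim: n => [|n IHn]; first by rewrite Bm_m0 ffXn mulr1.
rewrite Bm_rec /Y.
have hl := ff_lin.
have eY (B : {poly k}) : (lambda *: 'X + kappa%:P) * B = lambda *: (B * 'X) + kappa *: B.
  by rewrite mulrDl -scalerAl mul_polyC mulrC.
rewrite eY ![('X * _)]mulrC !(linD hl) !(linZ hl) !ffX !IHm IHn.
rewrite [pw m.+1]/= [pw n.+1]/= (proj2 HP).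
by rewrite -!addrA.
Qed.

End Alg.

Lemma ff_mul (k : comNzRingType) (lambda kappa : k) (R : comAlgType k) (P : R -> R)
  (HP : is_ext_RB_operator lambda kappa P) (p q : {poly k}) :
  ff P (sha_mul lambda kappa p q) = ff P p * ff P q.
Proof.
have hl := ff_lin P.
rewrite /sha_mul (lin_sum hl) {2 3}/ff mulr_suml; apply: eq_bigr => i _.
rewrite (lin_sum hl) mulr_sumr; apply: eq_bigr => j _.
rewrite (linZ hl) sha_Bm (ff_key HP).
by rewrite -scalerAl -scalerAr scalerA.
Qed.

Theorem corollary3p5 (k : comNzRingType) (lambda kappa : k)
    (R : comAlgType k) (P : R -> R) :
  is_ext_RB_operator lambda kappa P ->
  exists f : {poly k} -> R,
    is_ext_RB_hom_from_sha lambda kappa P f /\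
    (forall g : {poly k} -> R,
        is_ext_RB_hom_from_sha lambda kappa P g -> forall x, g x = f x).
Proof.
move=> HP; exists (ff P); split.
  split; [exact: ff_lin | exact: ff1 | exact: ff_mul | ].
  by move=> p; rewrite /sha_P (ffX HP).
move=> g [gl g1 _ gP] x.
have gXn n : g 'X^n = pw P n.
  by elim: n => [|n IH]; rewrite ?expr0 ?g1 // exprSr -/(sha_P _) gP IH.
have ex : x = \sum_(i < size x) x`_i *: 'X^i by rewrite -[LHS]coefK poly_def.
rewrite {1}ex (lin_sum gl) /ff; apply: eq_bigr => i _.
by rewrite (linZ gl) gXn.
Qed.
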